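(* Let $g$ be an $n$-person no-sink WTT game form satisfying the standing assumptions below. Then $g$ contains no $1$-box.
   Context: Let $X_1,\dots,X_n$ and $A$ be finite nonempty sets. An $n$-person game form is a map $g: X_1\times\cdots\times X_n\to A$; elements of $X=X_1\times\cdots\times X_n$ are strategy profiles. For a direction $i\in[n]$ write $X_{-i}=\prod_{t\neq i}X_t$, and for $s\in X_i$, $y\in X_{-i}$ write $(s,y)$ for the profile with $i$-th coordinate $s$ and other coordinates $y$. The hyperplane perpendicular to direction $i$ at $s\in X_i$ is $H_s=\{x\in X: x_i=s\}$; for a profile $x$ write $H_i^x$ for the hyperplane perpendicular to direction $i$ containing $x$. $g$ is weakly totally tight (WTT) if for every $i\in[n]$, all $s\neq s'$ in $X_i$ and all $y\neq y'$ in $X_{-i}$, at least one of $g(s,y)=g(s,y')$, $g(s,y)=g(s',y)$, $g(s',y')=g(s',y)$, $g(s',y')=g(s,y')$ holds. A set $S\subseteq X$ is a constant region if there is $c\in A$ with $g(x)=c$ for all $x\in S$. For distinct $j,k\in X_i$, $H_j^{\neq}(k)=\{(j,y): y\in X_{-i},\ g(j,y)\neq g(k,y)\}$. We write $H_j\stackrel{c}{\longrightarrow}H_k$ if $g(x)=c$ for all $x\in H_j^{\neq}(k)$, and $H_j\stackrel{c}{\Longrightarrow}H_k$ if $H_j\stackrel{c}{\longrightarrow}H_k$ and there is no outcome $d$ with $H_k\stackrel{d}{\longrightarrow}H_j$. If there exist $k\in X_i\setminus\{j\}$ and $c$ with $H_j\stackrel{c}{\Longrightarrow}H_k$, $c$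 is called the proper outcome of $H_j$ (for WTT $g$ it does not depend on $k$). We say an outcome $a$ is not the proper outcome of a hyperplane $H$ if $H$ has no proper outcome or its proper outcome differs from $a$. $H_j$ is a sink hyperplane if for every $k\in X_i\setminus\{j\}$ there is an outcome $c_k$ with $H_k\stackrel{c_k}{\longrightarrow}H_j$; $g$ is no-sink if there is no sink hyperplane in any direction. A WTT no-sink $g$ contains a $k$-box if there are profiles $x,y$ such that: $g(x)\neq g(y)$; $x$ and $y$ differ in exactly $k$ coordinates $i_1,\dots,i_k$; and for every $1\le t\le k$, $g(x)$ is not the proper outcome of $H_{i_t}^x$ and $g(y)$ is not the proper outcome of $H_{i_t}^y$. Standing assumptions: no hyperplane of $g$ is a constant region, and for every $i$ and distinct $j,k\in X_i$ there is $y\in X_{-i}$ with $g(j,y)\neq g(k,y)$. *)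

(* Defs.v *)
From mathcomp Require Import all_boot.
Unset Printing Implicit Defensive.

Section GameForm.
Variables (n : nat) (X : 'I_n -> finType) (A : finType).

Definition profile := forall i : 'I_n, X i.

(* (s, y): the profile y with its i-th coordinate replaced by s.
   A point y of X_{-i} is represented by any profile (its i-th coordinate
   is ignored by [upd y i s]). *)
Definition upd (y : profile) (i : 'I_n) (s : X i) : profile :=
  fun j => match @eqP _ i j with
           | ReflectT e => eq_rect i X s j e
           | ReflectF _ => y j
           end.

Definition differ_off (i : 'I_n) (y y' : profile) : Prop :=
  exists t : 'I_n, t != i /\ y t <> y' t.

Variable g : profile -> A.

Definition WTT : Prop :=
  forall (i : 'I_n) (s s' : X i) (y y' : profile),
    s != s' -> differ_off i y y' ->
    g (upd y i s) = g (upd y' i s) \/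
    g (upd y i s) = g (upd y i s') \/
    g (upd y' i s') = g (upd y i s') \/
    g (upd y' i s') = g (upd y' i s).

Definition arrow (i : 'I_n) (j k : X i) (c : A) : Prop :=
  forall y : profile, g (upd y i j) <> g (upd y i k) -> g (upd y i j) = c.

Definition darrow (i : 'I_n) (j k : X i) (c : A) : Prop :=
  arrow i j k c /\ ~ (exists d : A, arrow i k j d).

Definition proper_outcome (i : 'I_n) (j : X i) (c : A) : Prop :=
  exists k : X i, k != j /\ darrow i j k c.

Definition sink (i : 'I_n) (j : X i) : Prop :=
  forall k : X i, k != j -> exists c : A, arrow i k j c.

Definition no_sink : Prop := forall (i : 'I_n) (j : X i), ~ sink i j.

(* standing assumption 1: no hyperplane is a constant region *)
Definition no_constant_hyperplane : Prop :=
  forall (i : 'I_n) (s : X i),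
    ~ (exists c : A, forall x : profile, x i = s -> g x = c).

(* standing assumption 2: distinct parallel hyperplanes are distinguished *)
Definition parallel_distinguished : Prop :=
  forall (i : 'I_n) (j k : X i), j != k ->
    exists y : profile, g (upd y i j) <> g (upd y i k).

(* g contains a k-box: profiles x, y with g x <> g y, differing exactly on
   a set D of k coordinates, and for each t in D, g x is not the proper
   outcome of H_t^x (= H_{x t} in direction t), and likewise for y. *)
Definition contains_box (k : nat) : Prop :=
  exists (x y : profile) (D : {set 'I_n}),
    [/\ g x <> g y,
        #|D| = k,
        (forall t : 'I_n, t \in D <-> x t <> y t) &
        (forall t : 'I_n, t \in D ->
            ~ proper_outcome t (x t) (g x) /\ ~ proper_outcome t (y t) (g y))].

End GameForm.

Arguments profile {n} X.
Arguments upd {n X} y i s.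
Arguments differ_off {n X} i y y'.
Arguments WTT {n X A} g.
Arguments arrow {n X A} g i j k c.
Arguments darrow {n X A} g i j k c.
Arguments proper_outcome {n X A} g i j c.
Arguments sink {n X A} g i j.
Arguments no_sink {n X A} g.
Arguments no_constant_hyperplane {n X A} g.
Arguments parallel_distinguished {n X A} g.
Arguments contains_box {n X A} g k.

(* Main.v *)
Require Import Defs.
From mathcomp Require Import all_boot.
From Stdlib Require Import Classical FunctionalExtensionality.

Section Aux.
Variables (n : nat) (X : 'I_n -> finType) (A : finType).
Variable g : profile X -> A.
Hypothesis hWTT : WTT g.

Lemma upd_self (y : profile X) i : upd y i (y i) = y.
Proof.
apply: functional_extensionality_dep => t; rewrite /upd.
case: eqP => // e; by case: _ / e.
Qed.

Lemma upd_eqoff (y y' : profile X) i s :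
  (forall t, t != i -> y t = y' t) -> upd y i s = upd y' i s.
Proof.
move=> H; apply: functional_extensionality_dep => t; rewrite /upd.
case: eqP => // ne; apply: H; apply/eqP => e; apply: ne; by rewrite e.
Qed.

Variable i : 'I_n.
Local Notation f s y := (g (upd y i s)).

Lemma wtt' (s s' : X i) y y' : s != s' ->
  f s y = f s y' \/ f s y = f s' y \/ f s' y' = f s' y \/ f s' y' = f s y'.
Proof.
move=> ss.
case: (classic (differ_off i y y')) => hd; first exact: hWTT.
left; congr g; apply: upd_eqoff => t ti.
apply: NNPP => ne; apply: hd; by exists t.
Qed.

Lemma arr_val j k c y : arrow g i j k c -> f j y <> f k y -> f j y = c.
Proof. move=> H; exact: H. Qed.

Lemma dichot (a0 : A) j k : j != k ->
  (exists c, arrow g i j k c) \/ (exists d, arrow g i k j d).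
Proof.
move=> jk; apply: NNPP => H.
have H1 : ~ exists c, arrow g i j k c by move=> Hc; apply: H; left.
have H2 : ~ exists d, arrow g i k j d by move=> Hc; apply: H; right.
have [y0 [y0D _]] : exists y0, f j y0 <> f k y0 /\ f j y0 <> a0.
  apply: NNPP => Hn; apply: H1; exists a0 => y hy; apply: NNPP => hy2.
  apply: Hn; by exists y.
have [y1 [y1D y1n]] : exists y1, f j y1 <> f k y1 /\ f j y1 <> f j y0.
  apply: NNPP => Hn; apply: H1; exists (f j y0) => y hy; apply: NNPP => hy2.
  apply: Hn; by exists y.
have [w [wD wn]] : exists w, f k w <> f j w /\ f k w <> f k y0.
  apply: NNPP => Hn; apply: H2; exists (f k y0) => y hy; apply: NNPP => hy2.
  apply: Hn; by exists y.
have e1 : f k y1 = f k y0.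
  case: (wtt' _ _ y0 y1 jk) => [e|[e|[e|e]]] //; by [move: y1n; rewrite e | move: y1D; rewrite e].
have e2 : f j w = f j y0.
  case: (wtt' _ _ w y0 jk) => [e|[e|[e|e]]] //; [by move: wD; rewrite e | by move: wn; rewrite e | by move: y0D; rewrite e].
case: (wtt' _ _ w y1 jk) => [e|[e|[e|e]]].
- by apply: y1n; rewrite -e.
- by apply: wD; rewrite e.
- by apply: wn; rewrite -e1 e.
- by apply: y1D; rewrite e.
Qed.

Hypothesis hns : no_sink g.

Lemma side (j k : X i) (a b : A) z :
  j != k -> arrow g i j k a -> arrow g i k j b -> f j z = a -> f k z = b ->
  a <> b -> ~ proper_outcome g i j a ->
  exists m : X i, [/\ m != j, ~ (exists c, arrow g i m j c), f m z = a &
    forall y, f j y <> f m y -> f j y = b /\ f k y = b].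
Proof.
move=> jk ajk akj fjz fkz ab np.
have [m [mj hm]] : exists m, m != j /\ ~ exists c, arrow g i m j c.
  apply: NNPP => Hn; apply: (hns i j) => k' k'j; apply: NNPP => Hc.
  apply: Hn; by exists k'.
have [[c ajm]|[d amj]] := dichot a j m (ltac:(by rewrite eq_sym)); last by case: hm; exists d.
have pc : proper_outcome g i j c by exists m; split => //; split.
have ca : c <> a by move=> e; apply: np; rewrite -e.
have fmz : f m z = a.
  apply: NNPP => ne; apply: ca; rewrite -fjz; symmetry; apply: ajm => e; apply: ne; rewrite -fjz; exact: (esym e).
have key : forall y, f j y <> f m y -> f j y = c /\ f k y = c.
  move=> y hy; have fj := ajm y hy; split => //.
  apply: NNPP => ne; apply: ca; rewrite -fj; apply: ajk => e; apply: ne; transitivity (f j y); [exact: (esym e) | exact: fj].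
have mk : k != m.
  apply/eqP => e; apply: hm; exists b; by rewrite -e.
have cb : c = b.
  apply: NNPP => cb; apply: hm; exists a => y hy.
  have hy' : f j y <> f m y by move=> e; apply: hy; exact: (esym e).
  have [fj fk] := key y hy'.
  case: (wtt' _ _ z y mk) => [e|[e|[e|e]]].
  - by exfalso; apply: cb; rewrite -fkz e fk.
  - by exfalso; apply: ab; rewrite -fmz -fkz e.
  - by rewrite e fmz.
  - by exfalso; apply: hy'; rewrite e fj fk.
exists m; split => // y hy; rewrite -cb; exact: key.
Qed.

End Aux.

Theorem mainTheorem7 (n : nat) (X : 'I_n -> finType) (A : finType)
    (g : profile X -> A)
    (hX : forall i : 'I_n, 0 < #|X i|) (hA : 0 < #|A|)
    (hWTT : WTT g) (hnosink : no_sink g)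
    (hconst : no_constant_hyperplane g)
    (hdist : parallel_distinguished g) :
  ~ contains_box g 1.
Proof.
move=> [x [y [D [gxy cD hD hP]]]].
have /cards1P [i Di] : #|D| == 1 by rewrite cD.
have iD : i \in D by rewrite Di set11.
have jk : x i != y i by apply/eqP; apply/(hD i).
have [np1 np2] := hP i iD.
have fjx : g (upd x i (x i)) = g x by rewrite upd_self.
have fkx : g (upd x i (y i)) = g y.
  rewrite -{2}(@upd_self _ _ y i); congr g; apply: upd_eqoff => t ti.
  apply: NNPP => ne; move/(hD t): ne; by rewrite Di in_set1 (negbTE ti).
set a := g x in fjx np1 gxy *; set b := g y in fkx np2 gxy *.
set j := x i in jk fjx np1 *; set k := y i in jk fkx np2 *.
have kj : k != j by rewrite eq_sym.
have ba : b <> a by move=> e; apply: gxy; rewrite e.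
have [ajk akj] : arrow g i j k a /\ arrow g i k j b.
  have jkx : g (upd x i j) <> g (upd x i k) by rewrite fjx fkx.
  have kjx : g (upd x i k) <> g (upd x i j) by rewrite fjx fkx; exact: ba.
  case: (@dichot _ _ _ _ hWTT i a _ _ jk) => [[c ac]|[d ad]].
  - have ca : c = a by rewrite -fjx; symmetry; exact: ac.
    subst c; split => //.
    have [d ad] : exists d, arrow g i k j d.
      apply: NNPP => hn; apply: np1; exists k; split => //.
    have db : d = b by rewrite -fkx; symmetry; exact: ad.
    by subst d.
  - have db : d = b by rewrite -fkx; symmetry; exact: ad.
    subst d; split => //.
    have [c ac] : exists c, arrow g i j k c.
      apply: NNPP => hn; apply: np2; exists j; split => //.
    have ca : c = a by rewrite -fjx; symmetry; exact: ac.
    by subst c.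
have [m [mj hm fmz km]] := @side _ _ _ _ hWTT i hnosink _ _ _ _ _ jk ajk akj fjx fkx gxy np1.
have [m' [m'k hm' fm'z km']] := @side _ _ _ _ hWTT i hnosink _ _ _ _ _ kj akj ajk fkx fjx ba np2.
have [y1 [y1D y1n]] : exists y1, g (upd y1 i m) <> g (upd y1 i j) /\ g (upd y1 i m) <> a.
  apply: NNPP => hn; apply: hm; exists a => w hw; apply: NNPP => hw2; apply: hn; by exists w.
have mm : m != m'.
  apply/eqP => e; apply: gxy; by rewrite -fmz -fm'z e.
apply: hm'; exists b => w hw.
have hw' : g (upd w i k) <> g (upd w i m') by move=> e; apply: hw; rewrite e.
have [fkw fjw] := km' w hw'.
have fmw : g (upd w i m) = a.
  apply: NNPP => ne.
  have h : g (upd w i j) <> g (upd w i m) by move=> e; apply: ne; rewrite -e fjw.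
  have [fjw' _] := km w h; apply: gxy; by rewrite -fjw' fjw.
have h1 : g (upd y1 i j) <> g (upd y1 i m) by move=> e; apply: y1D; rewrite e.
have [fjy1 fky1] := km y1 h1.
have fm'y1 : g (upd y1 i m') = b.
  apply: NNPP => ne.
  have h : g (upd y1 i k) <> g (upd y1 i m') by move=> e; apply: ne; rewrite -e fky1.
  have [fky1' _] := km' y1 h; apply: gxy; by rewrite -fky1' fky1.
case: (@wtt' _ _ _ _ hWTT i _ _ y1 w mm) => [e|[e|[e|e]]].
- by exfalso; apply: y1n; rewrite e fmw.
- by exfalso; apply: y1D; rewrite e fm'y1 fjy1.
- by rewrite e fm'y1.
- by exfalso; apply: hw; rewrite e fmw fkw.
Qed.
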